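(* No deterministic max-finding algorithm has error less than $2$: for every deterministic algorithm that, using comparisons, outputs one of its input elements, there exist an input and comparator answers consistent with the model for which the output element $x$ satisfies $x \le x^* - 2$, where $x^*$ is the maximum value of an input element.
   Context: Model of imprecise comparisons: there are $n$ elements, each with a fixed unknown real value; we identify an element with its value. An algorithm accesses the elements only through a comparator: asked to compare $x_i$ and $x_j$, it answers either ''$x_i \ge x_j$'' or ''$x_j \ge x_i$''. If $|x_i-x_j|>1$ the answer is correct; if $|x_i-x_j|\le 1$ the answer is arbitrary (possibly adversarial and adaptive). The error of a max-finding algorithm is the smallest $k$ such that, for every input and every comparator behaviour consistent with this rule, the output $x$ satisfies $x \ge x^*-k$, where $x^*$ is the maximum value among the input elements. *)

(* Defs.v *)
From Stdlib Require Import Reals.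
From mathcomp Require Import all_boot.

Set Implicit Arguments.
Unset Strict Implicit.
Unset Printing Implicit Defensive.

(* A deterministic comparison-based algorithm on m input elements, indexed by
   'I_m, is a (finite, well-founded) decision tree:
   - [Out o]        : stop and output element o;
   - [Cmp i j t u]  : ask the comparator to compare x_i and x_j; continue with
                      t if the answer is "x_i >= x_j", with u if the answer is
                      "x_j >= x_i". *)
Inductive alg_tree (m : nat) : Type :=
| Out : 'I_m -> alg_tree m
| Cmp : 'I_m -> 'I_m -> alg_tree m -> alg_tree m -> alg_tree m.

(* The answer "x_i >= x_j" is consistent with the imprecise-comparison model
   iff it is correct or |x_i - x_j| <= 1. *)
Definition ans_ok (m : nat) (x : 'I_m -> R) (i j : 'I_m) : Prop :=
  Rle (x j) (x i) \/ Rle (Rabs (Rminus (x i) (x j))) 1.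

(* [outcome t x o]: there is a comparator behaviour consistent with the model
   on input x (answers possibly arbitrary/adaptive when values are within 1)
   under which the algorithm t outputs element o. *)
Inductive outcome (m : nat) (x : 'I_m -> R) : alg_tree m -> 'I_m -> Prop :=
| outcome_out o : outcome x (Out o) o
| outcome_ge i j t u o : ans_ok x i j -> outcome x t o -> outcome x (Cmp i j t u) o
| outcome_le i j t u o : ans_ok x j i -> outcome x u o -> outcome x (Cmp i j t u) o.

Definition xmax (n : nat) (x : 'I_n.+1 -> R) : R :=
  \big[Rmax/x ord0]_(i < n.+1) x i.

(* Main.v *)
Require Import Defs.
From Stdlib Require Import Reals Lra.
From mathcomp Require Import all_boot.

Definition beats (i j : 'I_3) : bool := (nat_of_ord j == (i.+1 %% 3)%N).

Fixpoint follow (t : alg_tree 3) : 'I_3 :=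
  match t with
  | Out o => o
  | Cmp i j t u => if (i == j) || beats i j then follow t else follow u
  end.

Definition xo (o : 'I_3) (k : 'I_3) : R := INR ((k + 3 - o) %% 3).

Lemma ord3_cases (P : 'I_3 -> Prop) :
  P (@Ordinal 3 0 isT) -> P (@Ordinal 3 1 isT) -> P (@Ordinal 3 2 isT) ->
  forall k, P k.
Proof.
move=> H0 H1 H2 [[|[|[|k]]] Hk] //.
- by rewrite (bool_irrelevance Hk isT).
- by rewrite (bool_irrelevance Hk isT).
- by rewrite (bool_irrelevance Hk isT).
Qed.

Lemma beats_ok o i j : beats i j -> ans_ok (xo o) i j.
Proof.
elim/ord3_cases: o; elim/ord3_cases: i; elim/ord3_cases: j;
  rewrite /beats /ans_ok /xo /= => // _; simpl;
  try (left; lra); right; rewrite Rabs_left1 || rewrite Rabs_right; lra.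
Qed.

Lemma beats_flip (i j : 'I_3) : ~~ ((i == j) || beats i j) -> beats j i.
Proof. by elim/ord3_cases: i; elim/ord3_cases: j. Qed.

Lemma follow_ok (x : 'I_3 -> R) :
  (forall i j, beats i j -> ans_ok x i j) ->
  forall t, outcome x t (follow t).
Proof.
move=> Hx; elim=> [o|i j t IHt u IHu] /=; first by constructor.
case E: ((i == j) || beats i j).
- apply: outcome_ge => //. case/orP: E => [/eqP->|/Hx //]. left; apply: Rle_refl.
- apply: outcome_le => //. apply: Hx; apply: beats_flip; by rewrite E.
Qed.

Lemma le_bigRmax (n : nat) (x : 'I_n -> R) (s : seq 'I_n) d k :
  k \in s -> Rle (x k) (\big[Rmax/d]_(i <- s) x i).
Proof.
elim: s => [//|a s IH]; rewrite in_cons big_cons => /orP [/eqP->|/IH H].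
- exact: Rmax_l.
- apply: Rle_trans H (Rmax_r _ _).
Qed.

Theorem mainTheorem2 (A : forall n : nat, alg_tree n.+1) :
  exists (n : nat) (x : 'I_n.+1 -> R) (o : 'I_n.+1),
    outcome x (A n) o /\ Rle (x o) (Rminus (xmax x) 2).
Proof.
exists 2, (xo (follow (A 2))), (follow (A 2)); split.
  by apply: follow_ok => i j; apply: beats_ok.
set o := follow (A 2).
have H2 : Rle (xo o (@Ordinal 3 ((o + 2) %% 3) (@ltn_pmod _ 3 isT))) (xmax (xo o)).
  by apply: le_bigRmax; rewrite mem_index_enum.
move: H2; rewrite /o; elim/ord3_cases: (follow (A 2)); rewrite /xo /=; simpl; lra.
Qed.
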